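(* Let $\mathcal F$ be a proper family on an infinite set $Q$. Then: (a) $\mathcal F^{\#}$ is a filter contained in $\mathcal F\cap\mathcal F^*$, and it is full if $\mathcal F$ is full; (b) $\mathcal F^{\#}=(\mathcal F^* )^{\#}$; (c) if $\mathcal F$ is a filter then $\mathcal F^{\#}=\mathcal F$; in particular $(\mathcal F^{\#})^{\#}=\mathcal F^{\#}$; (d) if $\mathcal F$ is a filterdual then $\mathcal F^{\#}=\mathcal F^*$.
   Context: A family on $Q$ is a collection $\mathcal F$ of subsets of $Q$ closed under supersets ($A\in\mathcal F$, $A\subset B\subset Q$ implies $B\in\mathcal F$). It is proper if $\mathcal F\ne\emptyset$ and $\emptyset\notin\mathcal F$. The dual is $\mathcal F^*=\{B\subset Q: B\cap A\ne\emptyset\text{ for all }A\in\mathcal F\}$. A filter is a proper family closed under finite intersections; a filterdual is the dual of a filter, equivalently a proper family with $A_1\cup A_2\in\mathcal F\Rightarrow A_1\in\mathcal F$ or $A_2\in\mathcal F$. A family $\mathcal F$ is full if it is proper and $B\in\mathcal F$ implies $B\setminus F\in\mathcal F$ for every finite $F\subset Q$. The sharp dual is $\mathcal F^{\#}=\{A\subset Q: A\cap B\in\mathcal F\text{ for all }B\in\mathcal F\}$. *)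

(* Defs.v *)
From HB Require Import structures.
From mathcomp Require Import all_boot.
From mathcomp Require Import boolp classical_sets cardinality.
Set Implicit Arguments. Unset Strict Implicit. Unset Printing Implicit Defensive.
Local Open Scope classical_set_scope.

Definition is_family (Q : Type) (F : set (set Q)) : Prop :=
  forall A B : set Q, F A -> A `<=` B -> F B.

Definition proper_family (Q : Type) (F : set (set Q)) : Prop :=
  [/\ is_family F, F !=set0 & ~ F set0].

Definition fam_dual (Q : Type) (F : set (set Q)) : set (set Q) :=
  [set B | forall A, F A -> B `&` A !=set0].

Definition fam_filter (Q : Type) (F : set (set Q)) : Prop :=
  proper_family F /\ (forall A B, F A -> F B -> F (A `&` B)).

Definition fam_filterdual (Q : Type) (F : set (set Q)) : Prop :=
  exists G : set (set Q), fam_filter G /\ F = fam_dual G.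

Definition fam_full (Q : Type) (F : set (set Q)) : Prop :=
  proper_family F /\
  (forall B E : set Q, F B -> finite_set E -> F (B `\` E)).

Definition fam_sharp (Q : Type) (F : set (set Q)) : set (set Q) :=
  [set A | forall B, F B -> F (A `&` B)].

(* Main.v *)
Require Import Defs.
From mathcomp Require Import all_boot.
From mathcomp Require Import boolp classical_sets cardinality.
From Stdlib Require Import Classical.
Local Open Scope classical_set_scope.

Lemma compl_dual (Q : Type) (F : set (set Q)) (X : set Q) :
  is_family F -> (fam_dual F (~` X) <-> ~ F X).
Proof.
move=> fam; split.
- move=> D FX; have [x [nx xx]] := D X FX; exact: nx xx.
- move=> nFX A FA; apply: NNPP => H; apply: nFX; apply: (fam A) => // x Ax.
  apply: NNPP => nx; apply: H; by exists x; split.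
Qed.

Lemma dual_dual (Q : Type) (G : set (set Q)) :
  is_family G -> fam_dual (fam_dual G) = G.
Proof.
move=> fam; apply/seteqP; split => X.
- move=> D; apply: NNPP => nG.
  have C := proj2 (@compl_dual _ _ X fam) nG.
  have [x [Xx nx]] := D _ C; exact: nx Xx.
- move=> GX C DC; have [x [Cx Xx]] := DC X GX; by exists x.
Qed.

Lemma sharp_dual (Q : Type) (F : set (set Q)) :
  is_family F -> fam_sharp F = fam_sharp (fam_dual F).
Proof.
move=> fam; apply/seteqP; split => A.
- move=> SA C DC D FD.
  have FAD := SA D FD.
  have [x [Cx [Ax Dx]]] := DC _ FAD.
  by exists x; split => //; split.
- move=> SA B FB; apply: NNPP => nF.
  have C := proj2 (@compl_dual _ _ _ fam) nF.
  have [x [[Ax nx] Bx]] := SA _ C B FB.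
  by apply: nx; split.
Qed.

Theorem proposition5p1 (Q : Type) (F : set (set Q)) :
  infinite_set (@setT Q) -> proper_family F ->
  [/\ (fam_filter (fam_sharp F) /\ fam_sharp F `<=` F `&` fam_dual F /\
        (fam_full F -> fam_full (fam_sharp F))),
      fam_sharp F = fam_sharp (fam_dual F),
      (fam_filter F -> fam_sharp F = F /\ fam_sharp (fam_sharp F) = fam_sharp F)
    & (fam_filterdual F -> fam_sharp F = fam_dual F)].
Proof.
move=> _ [fam [B0 FB0] nF0].
have propS : proper_family (fam_sharp F).
  split.
  - move=> A A' SA sub B FB; apply: (fam (A `&` B)); first exact: SA.
    by move=> x [Ax Bx]; split => //; apply: sub.
  - by exists setT => B FB; rewrite setTI.
  - by move=> S0; apply: nF0; have := S0 B0 FB0; rewrite set0I.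
have subS : fam_sharp F `<=` F.
  move=> A SA; apply: (fam (A `&` B0)); first exact: SA.
  by move=> x [].
split.
- split; [split|split].
  + exact: propS.
  + by move=> A1 A2 S1 S2 B FB; rewrite -setIA; apply: S1; apply: S2.
  + move=> A SA; split; first exact: subS.
    move=> B FB; apply: NNPP => ne; apply: nF0.
    have FAB := SA B FB.
    suff -> : set0 = A `&` B by [].
    apply/seteqP; split => x //= H; apply: ne; by exists x.
  + move=> [_ fullF]; split => // A E SA finE B FB.
    have -> : (A `\` E) `&` B = (A `&` B) `\` E.
      apply/seteqP; split => x; by move=> [[? ?] ?]; do 2?split.
    exact: (fullF _ _ (SA B FB) finE).
- exact: sharp_dual.
- move=> [_ capF].
  have eq : fam_sharp F = F.
    apply/seteqP; split => // A FA B FB; exact: capF.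
  by split => //; rewrite eq.
- move=> [G [[[famG [g0 Gg0] nG0] capG] ->]].
  rewrite -(@sharp_dual _ _ famG) (@dual_dual _ _ famG).
  apply/seteqP; split.
  + move=> A SA; apply: (famG (A `&` g0)); first exact: SA.
    by move=> x [].
  + move=> A GA B GB; exact: capG.
Qed.
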